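(* In the setting below, under the tight disturbance bound assumption and the persistent excitation assumption, the fixed-complexity parameter set $\Theta_t$ with periodic update converges to $\{\theta^\ast\}$ with probability 1; that is, with probability 1, $\bigcap_{t\ge0}\Theta_t=\{\theta^\ast\}$.
   Context: Setting: $\theta^\ast\in\mathbb{R}^p$ is a fixed (unknown) parameter vector. $\mathcal{W}=\{w\in\mathbb{R}^{n_x}:\Pi_w w\le\pi_w\}$ is a compact convex polytope with $\pi_w>0$. The disturbances $w_0,w_1,\dots$ are independent random vectors with $w_t\in\mathcal{W}$ for all $t$. $D_0,D_1,\dots\in\mathbb{R}^{n_x\times p}$ is a given (non-random) sequence of regressor matrices. For $t\ge1$ the (random) unfalsified parameter set is $\Delta_t=\{\theta\in\mathbb{R}^p: D_{t-1}(\theta^\ast-\theta)+w_{t-1}\in\mathcal{W}\}$. $\|\cdot\|$ is the Euclidean norm (induced 2-norm for matrices); $\partial\mathcal{W}$ is the boundary of $\mathcal{W}$; $[M]_i$ is the $i$th row of $M$. Tight disturbance bound assumption: there is a function $p_w:(0,\infty)\to(0,1]$ such that for all $w^0\in\partial\mathcal{W}$, all $\epsilon>0$ and all $t\ge0$, $\Pr\{\|w_t-w^0\|<\epsilon\}\ge p_w(\epsilon)$. Persistent excitation assumption: there exist $\tau>0$, $\beta>0$ and an integer $N_u\ge\lceil p/n_x\rceil$ such that for every $t\ge0$, $\|D_t\|\le\tau$ and $\sum_{j=t}^{t+N_u-1}D_j^\top D_j\succeq\beta I$. Fixed-complexity parameter set with periodic update: $M_\Theta\in\mathbb{R}^{r\times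 p}$ has rows of unit Euclidean norm and is such that $\Theta(\mu):=\{\theta:M_\Theta\theta\le\mu\}$ is bounded for every $\mu\in\mathbb{R}^r$; $\Theta_0=\Theta(\mu_0)$ contains $\theta^\ast$. For $t\ge1$: if $t=kN_u$ for some integer $k\ge1$, then $\Theta_t=\Theta(\mu_t)$ with $[\mu_t]_i=\max\{[M_\Theta]_i\theta:\theta\in\Theta_{t-N_u}\cap\bigcap_{j=t-N_u+1}^t\Delta_j\}$ for $i=1,\dots,r$; otherwise $\Theta_t=\Theta_{t-1}$. *)

(* Defs.v *)
From HB Require Import structures.
From mathcomp Require Import all_boot all_order all_algebra.
From mathcomp Require Import all_classical all_reals all_analysis.
Set Implicit Arguments. Unset Strict Implicit. Unset Printing Implicit Defensive.
Import Order.TTheory GRing.Theory Num.Theory.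
Local Open Scope classical_set_scope.
Local Open Scope ring_scope.

Section Defs.
Variable R : realType.

Definition vnorm n (v : 'cV[R]_n) : R := Num.sqrt (\sum_i (v i 0) ^+ 2).

Definition cVle n (u v : 'cV[R]_n) : Prop := forall i, u i 0 <= v i 0.

(* induced 2-norm bound: ||A|| <= c  iff  ||A v|| <= c ||v|| for all v *)
Definition opnorm_le m n (A : 'M[R]_(m, n)) (c : R) : Prop :=
  forall v : 'cV[R]_n, vnorm (A *m v) <= c * vnorm v.

(* Loewner order A >= b I for a square matrix: v^T (A - b I) v >= 0 *)
Definition psd_ge n (A : 'M[R]_n) (b : R) : Prop :=
  forall v : 'cV[R]_n, 0 <= ((v^T *m (A - b%:M) *m v) 0 0).

Definition polytope m n (Pi : 'M[R]_(m, n)) (pi : 'cV[R]_m) : set 'cV[R]_n :=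
  [set w | cVle (Pi *m w) pi].

Definition vbounded n (S : set 'cV[R]_n) : Prop :=
  exists C : R, forall x, S x -> vnorm x <= C.

Definition boundary n (S : set 'cV[R]_n) : set 'cV[R]_n :=
  [set x | forall e : R, 0 < e ->
     (exists a, S a /\ vnorm (a - x) < e) /\ (exists b, ~ S b /\ vnorm (b - x) < e)].

(* Borel sigma-algebra on R^n (generated by products of Borel sets of R) *)
Definition mxborel n : set (set 'cV[R]_n) :=
  <<s [set [set v : 'cV[R]_n | forall i, B i (v i 0)] | B in
        [set B : 'I_n -> set R | forall i, measurable (B i)]] >>.

Definition ceil_div (a b : nat) : nat := ((a + b.-1) %/ b)%N.

Definition ThetaSet r p (M : 'M[R]_(r, p)) (mu : 'cV[R]_r) : set 'cV[R]_p :=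
  [set th | cVle (M *m th) mu].

(* Unfalsified set Delta_t (t >= 1), for a given disturbance realization wr *)
Definition Delta nx p mw (Pi_w : 'M[R]_(mw, nx)) (pi_w : 'cV[R]_mw)
  (D : nat -> 'M[R]_(nx, p)) (thstar : 'cV[R]_p) (wr : nat -> 'cV[R]_nx)
  (t : nat) : set 'cV[R]_p :=
  [set th | polytope Pi_w pi_w (D t.-1 *m (thstar - th) + wr t.-1)].

(* The maximum of a (nonempty, compact-attained) set of reals; here a max of
   M_i theta over a compact polytope, which equals its supremum. *)
Definition maxR (S : set R) : R := sup S.

Fixpoint mu_per nx p r mw (Pi_w : 'M[R]_(mw, nx)) (pi_w : 'cV[R]_mw)
  (D : nat -> 'M[R]_(nx, p)) (thstar : 'cV[R]_p) (M : 'M[R]_(r, p))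
  (mu0 : 'cV[R]_r) (Nu : nat) (wr : nat -> 'cV[R]_nx) (k : nat) : 'cV[R]_r :=
  match k with
  | 0 => mu0
  | k'.+1 =>
      let prev := mu_per Pi_w pi_w D thstar M mu0 Nu wr k' in
      \col_i maxR [set (row i M *m th) 0 0 | th in
          ThetaSet M prev `&`
          [set th | forall j, (k' * Nu < j <= k'.+1 * Nu)%N ->
                              Delta Pi_w pi_w D thstar wr j th]]
  end.

(* Theta_t: updated at t = k N_u (k >= 1), constant otherwise, so
   Theta_t = Theta(mu_{floor(t/N_u) N_u}). *)
Definition Theta_t nx p r mw (Pi_w : 'M[R]_(mw, nx)) (pi_w : 'cV[R]_mw)
  (D : nat -> 'M[R]_(nx, p)) (thstar : 'cV[R]_p) (M : 'M[R]_(r, p))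
  (mu0 : 'cV[R]_r) (Nu : nat) (wr : nat -> 'cV[R]_nx) (t : nat) : set 'cV[R]_p :=
  ThetaSet M (mu_per Pi_w pi_w D thstar M mu0 Nu wr (t %/ Nu)%N).

End Defs.

Definition rvec_measurable (R : realType) (d : measure_display)
  (Omega : measurableType d) n (X : Omega -> 'cV[R]_n) : Prop :=
  forall A, mxborel A -> measurable (X @^-1` A).

Definition mutually_independent (R : realType) (d : measure_display)
  (Omega : measurableType d) (P : probability Omega R) n
  (w : nat -> Omega -> 'cV[R]_n) : Prop :=
  forall (S : seq nat) (A : nat -> set 'cV[R]_n),
    uniq S -> (forall t, t \in S -> mxborel (A t)) ->
    P (\big[setI/setT]_(t <- S) (w t @^-1` A t)) =
      (\prod_(t <- S) P (w t @^-1` A t))%E.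

(* Main.v *)
Require Import Defs.
From HB Require Import structures.
From mathcomp Require Import all_boot all_order all_algebra.
From mathcomp Require Import all_classical all_reals all_analysis.
From mathcomp Require Import ring lra zify.
Import Order.TTheory GRing.Theory Num.Theory.
Local Open Scope classical_set_scope.
Local Open Scope ring_scope.
Set Warnings "-notation-overridden -ambiguous-paths -notation-incompatible-prefix".
Set Implicit Arguments. Unset Strict Implicit. Unset Printing Implicit Defensive.

Section P1.
Variable R : realType.

Lemma vnorm_ge0 n (v : 'cV[R]_n) : 0 <= vnorm v.
Proof. exact: sqrtr_ge0. Qed.

Lemma vnorm_sqr n (v : 'cV[R]_n) : vnorm v ^+ 2 = \sum_i (v i 0) ^+ 2.
Proof. by rewrite /vnorm sqr_sqrtr // sumr_ge0 // => i _; rewrite sqr_ge0. Qed.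

Lemma coord_le_vnorm n (v : 'cV[R]_n) l : `|v l 0| <= vnorm v.
Proof.
rewrite /vnorm -sqrtr_sqr ler_sqrt; last by rewrite sumr_ge0 // => i _; rewrite sqr_ge0.
by rewrite (bigD1 l) //= lerDl sumr_ge0 // => i _; rewrite sqr_ge0.
Qed.

Lemma vnorm_eq0 n (v : 'cV[R]_n) : vnorm v = 0 -> v = 0.
Proof.
move=> h; apply/matrixP => i j; rewrite (ord1 j) mxE.
by apply/eqP; rewrite -normr_le0 -h coord_le_vnorm.
Qed.

Lemma vnormZ n (v : 'cV[R]_n) (s : R) : vnorm (s *: v) = `|s| * vnorm v.
Proof.
rewrite /vnorm -sqrtr_sqr -sqrtrM ?sqr_ge0 //; congr Num.sqrt.
by rewrite mulr_sumr; apply: eq_bigr => i _; rewrite mxE exprMn.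
Qed.
End P1.

Section P2.
Variable R : realType.
Variables (nx p mw r : nat) (thstar : 'cV[R]_p) (Pi_w : 'M[R]_(mw, nx)) (pi_w : 'cV[R]_mw)
  (D : nat -> 'M[R]_(nx, p)) (M : 'M[R]_(r, p)) (mu0 : 'cV[R]_r) (Nu : nat)
  (wr : nat -> 'cV[R]_nx).
Hypothesis wrW : forall t, polytope Pi_w pi_w (wr t).
Hypothesis Mrow : forall i, vnorm (row i M)^T = 1.
Hypothesis Mbd : forall mu : 'cV[R]_r, vbounded (ThetaSet M mu).
Hypothesis th0 : ThetaSet M mu0 thstar.

Lemma M_le1 i l : `|M i l| <= 1.
Proof. by rewrite -(Mrow i); have := coord_le_vnorm (row i M)^T l; rewrite !mxE. Qed.

Lemma rowM_coord i (th : 'cV[R]_p) : (M *m th) i 0 = (row i M *m th) 0 0.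
Proof. by rewrite !mxE; apply: eq_bigr => j _; rewrite mxE. Qed.

Lemma rowM_bound (C : R) i (th : 'cV[R]_p) : vnorm th <= C -> `|(row i M *m th) 0 0| <= p%:R * C.
Proof.
move=> hC; rewrite mxE.
apply: (le_trans (ler_norm_sum _ _ _)).
rewrite -[p in p%:R * _]card_ord -sum1_card natr_sum mulr_suml.
apply: ler_sum => l _; rewrite mxE normrM mul1r.
apply: (le_trans (y := 1 * `|th l 0|)).
  by apply: ler_wpM2r => //; exact: M_le1.
by rewrite mul1r; apply: le_trans (coord_le_vnorm _ _) hC.
Qed.

Lemma Delta_thstar j : Delta Pi_w pi_w D thstar wr j thstar.
Proof. by rewrite /Delta /= subrr mulmx0 add0r; exact: wrW. Qed.

Definition Sset k i := [set (row i M *m th) 0 0 | th in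
          ThetaSet M (mu_per Pi_w pi_w D thstar M mu0 Nu wr k) `&`
          [set th | forall j, (k * Nu < j <= k.+1 * Nu)%N ->
                              Delta Pi_w pi_w D thstar wr j th]].

Lemma mu_perS k i : mu_per Pi_w pi_w D thstar M mu0 Nu wr k.+1 i 0 = sup (Sset k i).
Proof. by rewrite /= mxE. Qed.

Lemma Sset_ub k i : has_ubound (Sset k i).
Proof.
have [C hC] := Mbd (mu_per Pi_w pi_w D thstar M mu0 Nu wr k).
exists (p%:R * C) => _ [th [hth _] <-].
exact: le_trans (ler_norm _) (rowM_bound _ (hC _ hth)).
Qed.

Lemma thstar_in k : ThetaSet M (mu_per Pi_w pi_w D thstar M mu0 Nu wr k) thstar.
Proof.
elim: k => [|k IH] //= i.
rewrite mxE rowM_coord; apply: ub_le_sup; first exact: Sset_ub.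
by exists thstar => //; split => // j _; exact: Delta_thstar.
Qed.

Lemma Sset_ne k i : Sset k i !=set0.
Proof. by exists ((row i M *m thstar) 0 0); exists thstar => //; split => //; [exact: thstar_in|move=> j _; exact: Delta_thstar]. Qed.

Lemma mu_perS_le k i (b : R) :
  (forall th, ThetaSet M (mu_per Pi_w pi_w D thstar M mu0 Nu wr k) th ->
    (forall j, (k * Nu < j <= k.+1 * Nu)%N -> Delta Pi_w pi_w D thstar wr j th) ->
    (row i M *m th) 0 0 <= b) ->
  mu_per Pi_w pi_w D thstar M mu0 Nu wr k.+1 i 0 <= b.
Proof.
move=> hb; rewrite mu_perS; apply: ge_sup; first exact: Sset_ne.
by move=> _ [th [h1 h2] <-]; exact: hb.
Qed.
End P2.

Section P3.
Variable R : realType.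

Lemma quad_scalar n (x : 'cV[R]_n) (b : R) :
  (x^T *m (b%:M) *m x) 0 0 = b * vnorm x ^+ 2.
Proof.
rewrite mul_mx_scalar -scalemxAl mxE vnorm_sqr; congr (_ * _).
by rewrite mxE; apply: eq_bigr => l _; rewrite mxE expr2.
Qed.

Lemma mxsubE m n (A B : 'M[R]_(m, n)) i j : (A - B) i j = A i j - B i j.
Proof. by rewrite !mxE. Qed.

Lemma psd_quad n (G : 'M[R]_n) b (x : 'cV[R]_n) : psd_ge G b ->
  b * vnorm x ^+ 2 <= (x^T *m G *m x) 0 0.
Proof.
move=> /(_ x); rewrite mulmxBr mulmxBl mxsubE quad_scalar.
by rewrite subr_ge0.
Qed.

Lemma G_unit n (G : 'M[R]_n) b : 0 < b -> G^T = G -> psd_ge G b -> G \in unitmx.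
Proof.
move=> b0 GT hG; rewrite -row_free_unit -kermx_eq0; apply/eqP/row_matrixP => l.
rewrite row0; set u := row l (kermx G).
have hu : u *m G = 0 by rewrite /u -row_mul mulmx_ker row0.
have : b * vnorm u^T ^+ 2 <= 0.
  apply: le_trans (psd_quad u^T hG) _.
  by rewrite trmxK -mulmxA -{1}GT -trmx_mul hu trmx0 mulmx0 mxE.
rewrite pmulr_rle0 // => h.
have : vnorm u^T = 0 by apply/eqP; rewrite -sqrf_eq0 eq_le h sqr_ge0.
by move/vnorm_eq0 => /(congr1 trmx); rewrite trmxK trmx0.
Qed.

Lemma G_solve n (G : 'M[R]_n) b (m : 'cV[R]_n) : 0 < b -> G^T = G -> psd_ge G b ->
  (forall l, `|m l 0| <= 1) ->
  exists x : 'cV[R]_n, G *m x = m /\ vnorm x <= n%:R / b.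
Proof.
move=> b0 GT hG hm; have hU := G_unit b0 GT hG.
exists (invmx G *m m); split; first exact: mulKVmx.
set x := invmx G *m m.
have h1 : b * vnorm x ^+ 2 <= n%:R * vnorm x.
  apply: le_trans (psd_quad x hG) _.
  rewrite -mulmxA mulKVmx // mxE.
  apply: le_trans (ler_norm _) _; apply: le_trans (ler_norm_sum _ _ _) _.
  rewrite -[n in n%:R * _]card_ord -sum1_card natr_sum mulr_suml.
  apply: ler_sum => l _; rewrite mxE normrM mul1r.
  apply: (le_trans (y := `|x l 0| * 1)); first by apply: ler_wpM2l.
  by rewrite mulr1 coord_le_vnorm.
have [->|xpos] := eqVneq (vnorm x) 0; first by rewrite divr_ge0 // ltW.
have xp : 0 < vnorm x by rewrite lt_neqAle eq_sym xpos vnorm_ge0.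
rewrite ler_pdivlMr // mulrC; rewrite expr2 mulrA in h1.
by rewrite -(ler_pM2r xp).
Qed.
End P3.

Section P4.
Variable R : realType.
Variables (nx mw : nat) (Pi_w : 'M[R]_(mw, nx)) (pi_w : 'cV[R]_mw).
Hypothesis pipos : forall i, 0 < pi_w i 0.
Hypothesis Wbd : vbounded (polytope Pi_w pi_w).
Local Notation W := (polytope Pi_w pi_w).

Definition dotv n (c w : 'cV[R]_n) := \sum_l c l 0 * w l 0.

Lemma W0 : W 0.
Proof. by move=> k; rewrite mulmx0 mxE ltW. Qed.

Lemma Plin (w1 d : 'cV[R]_nx) t k :
  (Pi_w *m (w1 + t *: d)) k 0 = (Pi_w *m w1) k 0 + t * (Pi_w *m d) k 0.
Proof. by rewrite mulmxDr -scalemxAr !mxE. Qed.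

Lemma vnorm_pos n (d : 'cV[R]_n) : d != 0 -> 0 < vnorm d.
Proof.
move=> dn0; rewrite lt_neqAle vnorm_ge0 andbT eq_sym; apply/eqP => /vnorm_eq0.
by move/eqP; rewrite (negbTE dn0).
Qed.

Lemma ray_boundary (w1 d : 'cV[R]_nx) : W w1 -> d != 0 ->
  exists t, 0 <= t /\ W (w1 + t *: d) /\ boundary W (w1 + t *: d).
Proof.
move=> Ww1 dn0.
pose T := [set t : R | 0 <= t /\ W (w1 + t *: d)].
have T0 : T 0 by split => //; rewrite scale0r addr0.
have [l dl] : exists l, d l 0 != 0.
  apply/existsP; apply: contraR dn0 => /existsPn h; apply/eqP/matrixP => i j.
  by rewrite (ord1 j) mxE; apply/eqP; move: (h i); rewrite negbK.
have [C hC] := Wbd.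
have Tub : has_ubound T.
  exists ((C + `|w1 l 0|) / `|d l 0|) => t [t0 Wt].
  rewrite ler_pdivlMr ?normr_gt0 //.
  have := le_trans (coord_le_vnorm _ l) (hC _ Wt); rewrite !mxE.
  move=> h; rewrite -(ger0_norm t0) -normrM.
  have : `|t * d l 0| <= `|w1 l 0 + t * d l 0| + `|w1 l 0|.
    by rewrite -{1}(addKr (w1 l 0) (t * d l 0)) addrC; apply: ler_normB.
  by move=> h2; apply: le_trans h2 _; rewrite lerD2r.
pose ts := sup T.
have ts0 : 0 <= ts by apply: ub_le_sup.
have Tne : T !=set0 by exists 0.
have Wts : W (w1 + ts *: d).
  move=> k; rewrite Plin.
  have [bpos|bneg] := ltP 0 ((Pi_w *m d) k 0).
    rewrite -lerBrDl -ler_pdivlMr //; apply: ge_sup => // t [t0 Wt].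
    by rewrite ler_pdivlMr // lerBrDl -Plin; exact: Wt.
  apply: le_trans (Ww1 k); rewrite gerDl; exact: mulr_ge0_le0.
exists ts; split => //; split => // e e0; split.
  by exists (w1 + ts *: d); split => //; rewrite subrr /vnorm big1 ?sqrtr0 // => i _; rewrite mxE expr0n.
have dp := vnorm_pos dn0.
pose s := e / (2 * vnorm d).
have s0 : 0 < s by rewrite divr_gt0 // mulr_gt0.
exists (w1 + (ts + s) *: d); split.
  move=> Wb; have : ts + s <= ts by apply: ub_le_sup => //; split => //; rewrite addr_ge0 // ltW.
  by rewrite gerDl leNgt s0.
have -> : w1 + (ts + s) *: d - (w1 + ts *: d) = s *: d.
  by rewrite scalerDl addrA [_ + s *: d]addrC addrK.
rewrite vnormZ ger0_norm ?ltW // /s.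
have -> : e / (2 * vnorm d) * vnorm d = e / 2.
  by field; rewrite gt_eqF.
by rewrite ltr_pdivrMr // ltr_pMr // ltr1n.
Qed.

Lemma W_lb (c : 'cV[R]_nx) : exists B, forall w, W w -> B <= dotv c w.
Proof.
have [C hC] := Wbd; exists (- \sum_l `|c l 0| * C) => w Ww.
rewrite lerNl; apply: le_trans (ler_norm _) _; rewrite normrN.
apply: le_trans (ler_norm_sum _ _ _) _; apply: ler_sum => l _.
rewrite normrM; apply: ler_wpM2l => //.
exact: le_trans (coord_le_vnorm _ l) (hC _ Ww).
Qed.

Lemma near_min_boundary (c : 'cV[R]_nx) (eta : R) : (0 < nx)%N -> 0 < eta ->
  exists w0, boundary W w0 /\ W w0 /\ forall w', W w' -> dotv c w0 <= dotv c w' + eta.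
Proof.
move=> nx0 eta0.
pose S := [set dotv c w | w in W].
have Sinf : has_inf S.
  split; first by exists (dotv c 0), 0 => //; exact: W0.
  have [B hB] := W_lb c; exists B => _ [w Ww <-]; exact: hB.
have [_ [w1 Ww1 <-] hw1] := inf_adherent eta0 Sinf.
have infle : forall w', W w' -> inf S <= dotv c w'.
  by move=> w' Ww'; apply: ge_inf; [case: Sinf|exists w'].
have [c0|cn0] := eqVneq c 0.
  have dn0 : (const_mx 1 : 'cV[R]_nx) != 0.
    apply/eqP => /matrixP /(_ (Ordinal nx0) 0); rewrite !mxE; apply/eqP; exact: oner_neq0.
  have [t [t0 [Wt bt]]] := ray_boundary Ww1 dn0.
  exists (w1 + t *: const_mx 1); split => //; split => // w' _.
  by rewrite /dotv c0 !big1 ?add0r ?ltW // => i _; rewrite mxE mul0r.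
have dn0 : - c != 0 by rewrite oppr_eq0.
have [t [t0 [Wt bt]]] := ray_boundary Ww1 dn0.
exists (w1 + t *: - c); split => //; split => // w' Ww'.
have -> : dotv c (w1 + t *: - c) = dotv c w1 - t * \sum_l c l 0 ^+ 2.
  rewrite /dotv mulr_sumr -sumrB; apply: eq_bigr => l _.
  by rewrite !mxE mulrDr expr2; ring.
apply: (le_trans (y := dotv c w1)).
  by rewrite gerBl mulr_ge0 // sumr_ge0 // => l _; rewrite sqr_ge0.
apply: ltW; apply: lt_le_trans hw1 _; rewrite lerD2r; exact: infle.
Qed.
End P4.

Section P5.
Variable R : realType.
Variables (nx p mw r : nat) (thstar : 'cV[R]_p) (Pi_w : 'M[R]_(mw, nx)) (pi_w : 'cV[R]_mw)
  (D : nat -> 'M[R]_(nx, p)) (M : 'M[R]_(r, p)) (mu0 : 'cV[R]_r) (Nu : nat)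
  (wr : nat -> 'cV[R]_nx).

Definition Gmat (k : nat) : 'M[R]_p := \sum_(k * Nu <= j < k * Nu + Nu) (D j)^T *m D j.

Lemma Gmat_sym k : (Gmat k)^T = Gmat k.
Proof.
apply/matrixP => a b; rewrite mxE !summxE; apply: eq_bigr => s _.
have h : ((D s)^T *m D s)^T = (D s)^T *m D s by rewrite trmx_mul trmxK.
by rewrite -[in RHS]h [RHS]mxE.
Qed.

Lemma mxaddE m n (A B : 'M[R]_(m, n)) i j : (A + B) i j = A i j + B i j.
Proof. by rewrite !mxE. Qed.

Lemma dotvE n (x y : 'cV[R]_n) : (x^T *m y) 0 0 = dotv x y.
Proof. by rewrite mxE; apply: eq_bigr => l _; rewrite mxE. Qed.

Lemma Gmat_ident k i (x v : 'cV[R]_p) : Gmat k *m x = (row i M)^T ->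
  (row i M *m v) 0 0 = \sum_(k * Nu <= s < k * Nu + Nu) dotv (D s *m x) (D s *m v).
Proof.
move=> hx.
have -> : row i M = (Gmat k *m x)^T by rewrite hx trmxK.
rewrite trmx_mul Gmat_sym /Gmat mulmx_sumr mulmx_suml summxE.
by apply: eq_bigr => s _; rewrite -dotvE trmx_mul !mulmxA.
Qed.

Lemma window_bound k i (x : 'cV[R]_p) (w0 : nat -> 'cV[R]_nx) (eta del Bc : R) :
  Gmat k *m x = (row i M)^T ->
  (forall s, (k * Nu <= s < k * Nu + Nu)%N ->
     [/\ forall w', polytope Pi_w pi_w w' -> dotv (D s *m x) (w0 s) <= dotv (D s *m x) w' + eta,
         forall l, `|wr s l 0 - w0 s l 0| < del &
         forall l, `|(D s *m x) l 0| <= Bc]) ->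
  forall th, (forall j, (k * Nu < j <= k.+1 * Nu)%N -> Delta Pi_w pi_w D thstar wr j th) ->
  (row i M *m th) 0 0 <= (row i M *m thstar) 0 0 + Nu%:R * (eta + nx%:R * Bc * del).
Proof.
move=> hx hw th hth.
rewrite -lerBlDl -opprB lerNl.
have -> : (row i M *m thstar) 0 0 - (row i M *m th) 0 0 = (row i M *m (thstar - th)) 0 0.
  by rewrite mulmxBr mxsubE.
rewrite (Gmat_ident _ hx).
have -> : Nu%:R * (eta + nx%:R * Bc * del) =
    \sum_(k * Nu <= s < k * Nu + Nu) (eta + nx%:R * Bc * del).
  by rewrite sumr_const_nat addnC addnK mulr_natl.
rewrite -sumrN; apply: ler_sum_nat => s hs.
have [hmin hbox hc] := hw s hs.
have Wu : polytope Pi_w pi_w (D s *m (thstar - th) + wr s).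
  have := hth s.+1; rewrite /Delta /=; apply; move: hs; rewrite mulSn; lia.
set c := D s *m x.
have e1 : dotv c (D s *m (thstar - th)) = dotv c (D s *m (thstar - th) + wr s) - dotv c (wr s).
  rewrite /dotv -sumrB; apply: eq_bigr => l _; rewrite mxaddE; ring.
have e2 : dotv c (wr s) <= dotv c (w0 s) + nx%:R * Bc * del.
  rewrite -lerBlDl /dotv -sumrB.
  rewrite -[nx in nx%:R * _]card_ord -sum1_card natr_sum !mulr_suml.
  apply: ler_sum => l _; rewrite -mulrBr mul1r.
  apply: le_trans (ler_norm _) _; rewrite normrM; apply: ler_pM => //.
  exact: ltW.
have := hmin _ Wu; rewrite e1; lra.
Qed.
End P5.

Section P6.
Variable R : realType.
Variables (d : measure_display) (Omega : measurableType d) (P : probability Omega R)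
  (nx : nat) (w : nat -> Omega -> 'cV[R]_nx).
Hypothesis wm : forall t, rvec_measurable (w t).
Hypothesis wind : mutually_independent P w.

Definition rect (S : seq nat) (F : nat -> set 'cV[R]_nx) :=
  \big[setI/setT]_(t <- S) (w t @^-1` F t).

Lemma rect_meas S F : (forall t, t \in S -> mxborel (F t)) -> measurable (rect S F).
Proof.
elim: S => [|t S IH] hF; rewrite /rect ?big_nil ?big_cons; first exact: measurableT.
apply: measurableI; first by apply: wm; apply: hF; rewrite mem_head.
by apply: IH => u hu; apply: hF; rewrite in_cons hu orbT.
Qed.

Definition pr (A : set Omega) : R := fine (P A).

Lemma prE A : measurable A -> P A = (pr A)%:E.
Proof.
move=> mA; rewrite /pr fineK // ge0_fin_numE ?measure_ge0 //.
by apply: le_lt_trans (probability_le1 P mA) _; rewrite ltry.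
Qed.

Lemma pr_ge0 A : measurable A -> 0 <= pr A.
Proof. by move=> mA; rewrite -lee_fin -prE // measure_ge0. Qed.

Lemma pr_le1 A : measurable A -> pr A <= 1.
Proof. by move=> mA; rewrite -lee_fin -prE // probability_le1. Qed.

Lemma pr_le A B : measurable A -> measurable B -> A `<=` B -> pr A <= pr B.
Proof. by move=> mA mB AB; rewrite -lee_fin -!prE // le_measure // inE. Qed.

Lemma prD A B : measurable A -> measurable B -> pr (A `\` B) = pr A - pr (A `&` B).
Proof.
move=> mA mB; have := measureD (mu:=P) mA mB.
move=> h; apply: EFin_inj; rewrite EFinB -!prE //.
all: try (by apply: measurableD); try (by apply: measurableI).
by apply: h; exact: (le_lt_trans (probability_le1 P mA) (ltry 1)).
Qed.

Lemma prod_prE S F : (forall t, t \in S -> mxborel (F t)) ->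
  (\prod_(t <- S) P (w t @^-1` F t))%E = (\prod_(t <- S) pr (w t @^-1` F t))%:E.
Proof.
elim: S => [|t S IH] hF; first by rewrite !big_nil.
rewrite !big_cons IH; last by move=> u hu; apply: hF; rewrite in_cons hu orbT.
by rewrite prE ?EFinM //; apply: wm; apply: hF; rewrite mem_head.
Qed.

Lemma rect_pr S F : uniq S -> (forall t, t \in S -> mxborel (F t)) ->
  pr (rect S F) = \prod_(t <- S) pr (w t @^-1` F t).
Proof. by move=> hu hF; rewrite /pr /rect wind // prod_prE. Qed.

Variables (Nu : nat) (B : nat -> set 'cV[R]_nx).
Hypothesis Bm : forall t, mxborel (B t).

Definition Awin k := rect (iota (k * Nu) Nu) B.
Definition Xn n := \big[setI/setT]_(0 <= k < n) ~` Awin k.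

Lemma Awin_meas k : measurable (Awin k).
Proof. by apply: rect_meas => t _; exact: Bm. Qed.

Lemma Xn_meas n : measurable (Xn n).
Proof.
elim: n => [|n IH]; first by rewrite /Xn big_geq.
by rewrite /Xn big_nat_recr //= -/(Xn n); apply: measurableI => //; apply: measurableC; exact: Awin_meas.
Qed.

Lemma claim n : forall S F, uniq S ->
  (forall t, t \in S -> (n * Nu <= t)%N /\ mxborel (F t)) ->
  pr (rect S F `&` Xn n) = pr (rect S F) * \prod_(0 <= k < n) (1 - pr (Awin k)).
Proof.
elim: n => [|n IH] S F hu hS.
  by rewrite /Xn !big_geq // setIT mulr1.
set W := iota (n * Nu) Nu.
have hSm : forall t, t \in S -> mxborel (F t) by move=> t /hS [].
have mR := rect_meas hSm.
have hXn := Xn_meas n.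
have e1 : rect S F `&` Xn n.+1 = (rect S F `&` Xn n) `\` Awin n.
  by rewrite /Xn big_nat_recr //= -/(Xn n) setIA setDE.
pose F' t := if t \in W then B t else F t.
have SW : forall t, t \in S -> t \notin W.
  move=> t /hS [ht _]; rewrite mem_iota; move: ht; rewrite mulSn; lia.
have eS : rect S F' = rect S F.
  by apply: eq_big_seq => t tS; rewrite /F' (negbTE (SW t tS)).
have eW : rect W F' = Awin n.
  by apply: eq_big_seq => t tW; rewrite /F' tW.
have hF' : forall t, t \in S ++ W -> mxborel (F' t).
  move=> t; rewrite mem_cat /F'; case: ifP => // _; rewrite orbF; exact: hSm.
have huW : uniq (S ++ W).
  rewrite cat_uniq hu iota_uniq andbT; apply/hasPn => t tW; apply/negP => tS.
  by move: (SW t tS); rewrite tW.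
have ecat : rect (S ++ W) F' = rect S F `&` Awin n.
  by rewrite /rect big_cat /= -/(rect S F') -/(rect W F') eS eW.
have e2 : (rect S F `&` Xn n) `&` Awin n = rect (S ++ W) F' `&` Xn n.
  by rewrite ecat setIAC.
have pcat : pr (rect (S ++ W) F') = pr (rect S F) * pr (Awin n).
  rewrite rect_pr // big_cat /= -rect_pr //; last by move=> t tS; apply: hF'; rewrite mem_cat tS.
  rewrite -eS rect_pr //; last by move=> t tS; apply: hF'; rewrite mem_cat tS.
  rewrite -eW rect_pr //; [exact: iota_uniq| by move=> t tW; apply: hF'; rewrite mem_cat tW orbT].
rewrite e1 prD //; last exact: Awin_meas.
all: try exact: measurableI.
rewrite e2 (IH (S ++ W) F') //; last first.
  move=> t; rewrite mem_cat => /orP [tS|tW]; (split; last by apply: hF'; rewrite mem_cat ?tS ?tW ?orbT).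
    by have [h _] := hS t tS; move: h; rewrite mulSn; lia.
  by move: tW; rewrite mem_iota; lia.
rewrite (IH S F) //; last first.
  by move=> t tS; have [h h'] := hS t tS; split => //; move: h; rewrite mulSn; lia.
by rewrite pcat big_nat_recr //=; ring.
Qed.

Lemma pr_setT : pr setT = 1.
Proof. by rewrite /pr probability_setT. Qed.

Lemma bernoulli_like (q : R) n : 0 <= q <= 1 -> (1 - q) ^+ n * (1 + n%:R * q) <= 1.
Proof.
move=> /andP [q0 q1]; elim: n => [|n IH]; first by rewrite expr0 mul0r addr0 mulr1.
have a0 : 0 <= (1 - q) ^+ n by apply: exprn_ge0; lra.
have e : (1 - q) ^+ n.+1 * (1 + (n.+1)%:R * q) =
  (1 - q) ^+ n * (1 + n%:R * q) - (1 - q) ^+ n * (q ^+ 2 * (n%:R + 1)).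
  by rewrite exprS -natr1; ring.
rewrite e; apply: le_trans IH; rewrite lerBlDr lerDl.
by apply: mulr_ge0 => //; apply: mulr_ge0; [exact: sqr_ge0|exact: addr_ge0].
Qed.

Lemma never_null (q : R) : 0 < q -> (forall k, q <= pr (Awin k)) ->
  P (\bigcap_k ~` Awin k) = 0%E.
Proof.
move=> q0 hq.
have mZ : measurable (\bigcap_k ~` Awin k).
  by apply: bigcapT_measurable => k; apply: measurableC; exact: Awin_meas.
have q1 : q <= 1 by apply: le_trans (hq 0%N) (pr_le1 (Awin_meas 0)).
have hX : forall n, pr (Xn n) <= (1 - q) ^+ n.
  move=> n; have := claim (n:=n) (S:=[::]) (F:=B) isT (fun t (h : t \in [::]) => False_ind _ (notF h)).
  rewrite /rect big_nil setTI pr_setT mul1r => ->.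
  rewrite (_ : (1 - q) ^+ n = \prod_(0 <= k < n) (1 - q)); last by rewrite prodr_const_nat subn0.
  apply: ler_prod => k _.
  have := hq k; have := pr_le1 (Awin_meas k); lra.
have hZ : forall n, pr (\bigcap_k ~` Awin k) <= (1 - q) ^+ n.
  move=> n; apply: le_trans (hX n); apply: pr_le => //; first exact: Xn_meas.
  move=> om hom; rewrite /Xn; elim: n => [|n IHn]; first by rewrite big_geq.
  by rewrite big_nat_recr //=; split => //; exact: hom.
rewrite prE //; congr (_%:E).
set a := pr _ in hZ *.
have a0 : 0 <= a by apply: pr_ge0.
apply/eqP; rewrite eq_le a0 andbT; apply/negP => /negP; rewrite -ltNge => apos.
have hb : 0 <= (a * q)^-1 by rewrite invr_ge0 ltW // mulr_gt0.
have := archi_boundP hb; set N := Num.Def.archi_bound _ => hN.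
have h1 := hZ N.
have : a * (1 + N%:R * q) <= 1.
  apply: (le_trans (y := (1 - q) ^+ N * (1 + N%:R * q))).
    by apply: ler_wpM2r => //; rewrite addr_ge0 // mulr_ge0 // ltW.
  by apply: bernoulli_like; apply/andP; split => //; exact: ltW.
move=> h2.
have apq : 0 < a * q by rewrite mulr_gt0.
have := hN; rewrite -(ltr_pM2r apq) mulVf ?gt_eqF // => h.
nra.
Qed.
End P6.

Section P7.
Variable R : realType.
Variables (d : measure_display) (Omega : measurableType d) (P : probability Omega R)
  (nx : nat) (w : nat -> Omega -> 'cV[R]_nx).
Hypothesis wm : forall t, rvec_measurable (w t).

Definition box (c : 'cV[R]_nx) (del : R) : set 'cV[R]_nx :=
  [set v | forall l, `|v l 0 - c l 0| < del].

Lemma box_borel c del : mxborel (box c del).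
Proof.
apply: sub_sigma_algebra; exists (fun l => `]c l 0 - del, c l 0 + del[%classic).
  by move=> l; exact: measurable_itv.
apply/seteqP; split => v /= h l; move: (h l); rewrite /= in_itv /= ltr_distl //.
Qed.

Lemma coord_meas t l : measurable_fun setT (fun om => w t om l 0).
Proof.
move=> _ Y mY; rewrite setTI.
have -> : (fun om => w t om l 0) @^-1` Y =
    w t @^-1` [set v | forall i, (if i == l then Y else setT) (v i 0)].
  apply/seteqP; split => om /=.
    by move=> hY i; case: eqP => // ->.
  by move/(_ l); rewrite eqxx.
apply: wm; apply: sub_sigma_algebra; eexists; last reflexivity.
by move=> i; case: eqP.
Qed.

Lemma ball_meas t (c : 'cV[R]_nx) e : 0 < e ->
  measurable [set om | vnorm (w t om - c) < e].
Proof.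
move=> e0.
pose f om := \sum_(l : 'I_nx) (w t om l 0 - c l 0) ^+ 2.
have mf : measurable_fun setT f.
  apply: measurable_sum => l; apply: measurable_realfun.measurable_funX; apply: measurable_realfun.measurable_funB.
    exact: coord_meas.
  exact: measurable_cst.
have -> : [set om | vnorm (w t om - c) < e] = f @^-1` `]-oo, e ^+ 2[.
  have ee : e = Num.sqrt (e ^+ 2) by rewrite sqrtr_sqr ger0_norm // ltW.
  apply/seteqP; split => om /=; rewrite in_itv /= /vnorm;
   (have -> : \sum_i ((w t om - c) i 0) ^+ 2 = f om by apply: eq_bigr => l _; rewrite !mxE);
   rewrite [in X in Num.sqrt _ < X]ee ltr_sqrt ?exprn_gt0 //.
have := mf measurableT _ (measurable_itv `]-oo, e ^+ 2[); rewrite setTI; exact.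
Qed.

Lemma ball_sub_box t (c : 'cV[R]_nx) e :
  [set om | vnorm (w t om - c) < e] `<=` w t @^-1` box c e.
Proof.
move=> om /= h l; apply: le_lt_trans h; have := coord_le_vnorm (w t om - c) l.
by rewrite !mxE.
Qed.
End P7.
Section P8.
Variable R : realType.
Variables (d : measure_display) (Omega : measurableType d) (P : probability Omega R)
  (nx p mw r : nat) (thstar : 'cV[R]_p) (Pi_w : 'M[R]_(mw, nx)) (pi_w : 'cV[R]_mw)
  (D : nat -> 'M[R]_(nx, p)) (w : nat -> Omega -> 'cV[R]_nx)
  (M : 'M[R]_(r, p)) (mu0 : 'cV[R]_r) (p_w : R -> R) (tau beta : R) (Nu : nat).
Hypothesis pipos : forall i, 0 < pi_w i 0.
Hypothesis Wbd : vbounded (polytope Pi_w pi_w).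
Hypothesis wm : forall t, rvec_measurable (w t).
Hypothesis wind : mutually_independent P w.
Hypothesis wW : forall t (om : Omega), polytope Pi_w pi_w (w t om).
Hypothesis pw1 : forall e : R, 0 < e -> 0 < p_w e <= 1.
Hypothesis tight : forall w0, boundary (polytope Pi_w pi_w) w0 -> forall e : R, 0 < e ->
     forall t, ((p_w e)%:E <= P [set om | (vnorm (w t om - w0) < e)%R])%E.
Hypothesis tau0 : 0 < tau.
Hypothesis beta0 : 0 < beta.
Hypothesis Dop : forall t, opnorm_le (D t) tau.
Hypothesis Dpe : forall t, psd_ge (\sum_(t <= j < t + Nu) (D j)^T *m D j) beta.
Hypothesis Mrow : forall i, vnorm (row i M)^T = 1.
Hypothesis Mbd : forall mu : 'cV[R]_r, vbounded (ThetaSet M mu).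
Hypothesis th0 : ThetaSet M mu0 thstar.
Hypothesis nx0 : (0 < nx)%N.
Hypothesis Nu0 : (0 < Nu)%N.

Lemma rect_mem (S : seq nat) F om : rect w S F om -> forall s, s \in S -> F s (w s om).
Proof.
elim: S => [|t S IH] //; rewrite /rect big_cons => -[h1 h2] s.
rewrite in_cons => /orP [/eqP ->|hs] //; exact: IH.
Qed.

Lemma div_window k s : (k * Nu <= s < k * Nu + Nu)%N -> (s %/ Nu)%N = k.
Proof.
move=> /andP [h1 h2]; rewrite -(subnKC h1) divnMDl // divn_small ?addn0 //.
by rewrite ltn_subLR.
Qed.

Lemma row_conv i (eps : R) : 0 < eps -> exists Z : set Omega,
  [/\ measurable Z, P Z = 0%E & forall om, ~ Z om -> exists k,
    mu_per Pi_w pi_w D thstar M mu0 Nu (fun t => w t om) k i 0 <= (row i M *m thstar) 0 0 + eps].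
Proof.
move=> eps0.
have hx : forall k, exists x, Gmat D Nu k *m x = (row i M)^T /\ vnorm x <= p%:R / beta.
  move=> k; apply: G_solve => //; [exact: Gmat_sym | exact: Dpe | by move=> l; rewrite !mxE; exact: M_le1].
pose xk k := sval (cid (hx k)).
have xkP k : Gmat D Nu k *m xk k = (row i M)^T /\ vnorm (xk k) <= p%:R / beta := svalP (cid (hx k)).
pose Bc := tau * (p%:R / beta).
have Bc0 : 0 <= Bc by rewrite mulr_ge0 ?divr_ge0 // ltW.
pose c s := D s *m xk (s %/ Nu)%N.
have cB : forall s l, `|c s l 0| <= Bc.
  move=> s l; apply: le_trans (coord_le_vnorm _ l) _; apply: le_trans (Dop s _) _.
  by rewrite /Bc; apply: ler_wpM2l; [exact: ltW | exact: (xkP _).2].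
pose K := Nu%:R * (1 + nx%:R * Bc).
have K0 : 0 <= K by rewrite mulr_ge0 // addr_ge0 // mulr_ge0.
pose del := eps / (K + 1).
have del0 : 0 < del by rewrite divr_gt0 // ltr_wpDl.
have Kdel : K * del <= eps.
  rewrite /del mulrA ler_pdivrMr; last by rewrite ltr_wpDl.
  nra.
have hw0 s := near_min_boundary pipos Wbd (c s) nx0 del0.
pose w0 s := sval (cid (hw0 s)).
have w0P s : boundary (polytope Pi_w pi_w) (w0 s) /\ polytope Pi_w pi_w (w0 s) /\
  (forall w', polytope Pi_w pi_w w' -> dotv (c s) (w0 s) <= dotv (c s) w' + del) := svalP (cid (hw0 s)).
pose B s := box (w0 s) del.
have Bm s : mxborel (B s) := box_borel _ _.
pose q := p_w del ^+ Nu.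
have q0 : 0 < q by rewrite exprn_gt0 //; case/andP: (pw1 del0).
have hq : forall k, q <= pr P (Awin w Nu B k).
  move=> k; rewrite /Awin (rect_pr wm wind); last (by move=> t _; exact: Bm); last exact: iota_uniq.
  rewrite (_ : iota (k * Nu) Nu = index_iota (k * Nu) (k * Nu + Nu)); last by rewrite /index_iota addKn.
  rewrite /q -{1}[Nu](addKn (k * Nu)) -prodr_const_nat; apply: ler_prod => s _.
  apply/andP; split; first by case/andP: (pw1 del0) => /ltW.
  have [bw0 _] := w0P s.
  apply: le_trans (pr_le P (ball_meas wm s (w0 s) del0) (wm s (Bm s)) (ball_sub_box (w:=w) (t:=s) (c:=w0 s) (e:=del))).
  rewrite -lee_fin -prE; [exact: (tight bw0 del0 s)| exact: (ball_meas wm s (w0 s) del0)].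
exists (\bigcap_k ~` Awin w Nu B k); split.
- by apply: bigcapT_measurable => k; apply: measurableC; exact: Awin_meas.
- exact: (never_null wm wind Bm q0 hq).
move=> om hom.
have [k hk] : exists k, Awin w Nu B k om.
  case: (pselect (exists k, Awin w Nu B k om)) => // hn; exfalso; apply: hom => k _ hk.
  by apply: hn; exists k.
exists k.+1.
have hbox : forall s, (k * Nu <= s < k * Nu + Nu)%N -> B s (w s om).
  by move=> s hs; apply: (rect_mem hk); rewrite mem_iota.
apply: (mu_perS_le (fun t => wW t om) Mrow Mbd th0) => th _ hth.
apply: le_trans (window_bound (w0:=w0) (eta:=del) (del:=del) (Bc:=Bc) (xkP k).1 _ hth) _.
  move=> s hs; have sk := div_window hs.
  have := w0P s; rewrite /c sk => -[_ [_ hmin]]; split => //.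
    exact: (hbox s hs).
  by move=> l; have := cB s l; rewrite /c sk.
rewrite lerD2l; apply: le_trans Kdel; rewrite /K.
have -> : del + nx%:R * Bc * del = (1 + nx%:R * Bc) * del by ring.
by rewrite mulrA.
Qed.
End P8.


Lemma le_addinv (R : realType) (x y : R) : (forall n : nat, x <= y + (n.+1%:R)^-1) -> x <= y.
Proof.
move=> h; apply/ler_addgt0Pr => e e0.
have he : 0 <= e^-1 by rewrite invr_ge0 ltW.
have := archi_boundP he; set N := Num.Def.archi_bound _ => hN.
apply: le_trans (h N) _; rewrite lerD2l.
rewrite -(invrK e) lef_pV2 ?posrE ?invr_gt0 //.
by apply: ltW; apply: lt_le_trans hN _; rewrite ler_nat.
Qed.

Lemma rec0 (R : realType) r p (M : 'M[R]_(r, p)) (v : 'cV[R]_p) :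
  vbounded (ThetaSet M 0) -> (forall i, (M *m v) i 0 <= 0) -> v = 0.
Proof.
move=> [C hC] hv; apply: vnorm_eq0.
have hs : forall s : R, 0 <= s -> s * vnorm v <= C.
  move=> s s0; rewrite -(ger0_norm s0) -vnormZ; apply: hC => i.
  rewrite -scalemxAr [in X in X <= _]mxE [in X in _ <= X]mxE.
  exact: mulr_ge0_le0 s0 (hv i).
have [//|vn0] := eqVneq (vnorm v) 0.
have vp : 0 < vnorm v by rewrite lt_neqAle eq_sym vn0 vnorm_ge0.
have := hs ((`|C| + 1) / vnorm v); rewrite divfK ?gt_eqF // => /(_ _).
have h0 : 0 <= (`|C| + 1) / vnorm v by rewrite divr_ge0 // ?addr_ge0 // ltW.
move=> /(_ h0) h; exfalso; have := ler_norm C; lra.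
Qed.

Unset Implicit Arguments.
Theorem corollary3
  (R : realType) (d : measure_display) (Omega : measurableType d)
  (P : probability Omega R)
  (nx p mw r : nat)
  (thstar : 'cV[R]_p)
  (Pi_w : 'M[R]_(mw, nx)) (pi_w : 'cV[R]_mw)
  (D : nat -> 'M[R]_(nx, p))
  (w : nat -> Omega -> 'cV[R]_nx)
  (M : 'M[R]_(r, p)) (mu0 : 'cV[R]_r)
  (p_w : R -> R) (tau beta : R) (Nu : nat) :
  (* W is a compact convex polytope with pi_w > 0 *)
  (forall i, 0 < pi_w i 0) ->
  vbounded (polytope Pi_w pi_w) ->
  (* disturbances: independent random vectors with values in W *)
  (forall t, rvec_measurable (w t)) ->
  mutually_independent P w ->
  (forall t (om : Omega), polytope Pi_w pi_w (w t om)) ->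
  (* tight disturbance bound *)
  (forall e : R, 0 < e -> 0 < p_w e <= 1) ->
  (forall w0, boundary (polytope Pi_w pi_w) w0 -> forall e : R, 0 < e ->
     forall t, ((p_w e)%:E <= P [set om | (vnorm (w t om - w0) < e)%R])%E) ->
  (* persistent excitation *)
  0 < tau -> 0 < beta -> (ceil_div p nx <= Nu)%N ->
  (forall t, opnorm_le (D t) tau) ->
  (forall t, psd_ge (\sum_(t <= j < t + Nu) (D j)^T *m D j) beta) ->
  (* fixed-complexity parameter set *)
  (forall i, vnorm (row i M)^T = 1) ->
  (forall mu : 'cV[R]_r, vbounded (ThetaSet M mu)) ->
  ThetaSet M mu0 thstar ->
  (* conclusion: with probability 1, the intersection of Theta_t is {thstar} *)
  {ae P, forall om : Omega,
     [set th | forall t, Theta_t Pi_w pi_w D thstar M mu0 Nu (fun t => w t om) t th]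
     = [set thstar]}.
Proof.
move=> pipos Wbd wm wind wW pw1 tight tau0 beta0 hNu Dop Dpe Mrow Mbd th0.
have hin : forall om t, Theta_t Pi_w pi_w D thstar M mu0 Nu (fun t => w t om) t thstar.
  by move=> om t; exact: (thstar_in D Nu (fun t => wW t om) Mrow Mbd th0).
suff [N [hN hNs]] : exists N : set Omega, P.-negligible N /\ forall om, ~ N om ->
    forall th, (forall t, Theta_t Pi_w pi_w D thstar M mu0 Nu (fun t => w t om) t th) -> th = thstar.
  rewrite /prop_near1 /nbhs /=; apply: (negligibleS _ hN) => om /= hom.
  case: (pselect (N om)) => // hn; exfalso; apply: hom; apply/seteqP; split => th /=.
    by move=> h; exact: (hNs om hn th h).
  by move=> ->; exact: hin.
have [p0|pp] := posnP p.
  exists set0; split; first exact: negligible_set0.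
  move=> om _ th _; apply/matrixP => i j; have := ltn_ord i; rewrite {2}p0.
  by [].
pose v1 : 'cV[R]_p := const_mx 1.
have v1n0 : v1 != 0.
  by apply/eqP => /matrixP /(_ (Ordinal pp) 0); rewrite !mxE; apply/eqP; exact: oner_neq0.
have Gne : forall G : 'M[R]_p, psd_ge G beta -> G = 0 -> False.
  move=> G hG G0; have := psd_quad v1 hG; rewrite G0 mulmx0 mul0mx mxE.
  by rewrite pmulr_rle0 // leNgt exprn_gt0 // vnorm_pos.
have Nu0 : (0 < Nu)%N.
  rewrite lt0n; apply/eqP => Nu00; apply: (Gne _ (Dpe 0%N)).
  by rewrite Nu00 big_geq.
have nx0 : (0 < nx)%N.
  rewrite lt0n; apply/eqP => nx00; apply: (Gne _ (Dpe 0%N)).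
  by apply: big1 => j _; move: (D j); rewrite nx00 => Dj; rewrite flatmx0 mulmx0.
have rc := row_conv pipos Wbd wm wind wW pw1 tight tau0 beta0 Dop Dpe Mrow Mbd th0 nx0 Nu0.
have epos : forall n : nat, 0 < (n.+1%:R : R)^-1 by move=> n; rewrite invr_gt0 ltr0Sn.
pose Z i n := sval (cid (rc i _ (epos n))).
have ZP : forall i n, [/\ measurable (Z i n), P (Z i n) = 0%E & forall om, ~ Z i n om -> exists k,
    mu_per Pi_w pi_w D thstar M mu0 Nu (fun t => w t om) k i 0 <= (row i M *m thstar) 0 0 + (n.+1%:R)^-1].
  by move=> i n; exact: (svalP (cid (rc i _ (epos n)))).
exists (\bigcup_n \big[setU/set0]_(i : 'I_r) Z i n); split.
  apply: negligible_bigcup => n; elim/big_ind: _ => [|A B hA hB|i _].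
  - exact: negligible_set0.
  - exact: negligibleU.
  by have [mZ PZ _] := ZP i n; exists (Z i n); split.
move=> om hom th hth.
have Zn : forall i n, ~ Z i n om.
  move=> i n hz; apply: hom; exists n => //.
  have : i \in index_enum 'I_r by rewrite mem_index_enum.
  elim: (index_enum 'I_r) => [//|j s IH]; rewrite in_cons big_cons => /orP [/eqP <-|hs].
    by left.
  by right; exact: IH.
apply/eqP; rewrite -subr_eq0; apply/eqP; apply: (rec0 (Mbd 0)) => i.
rewrite mulmxBr mxsubE subr_le0 (rowM_coord M i th) (rowM_coord M i thstar); apply: le_addinv => n.
have [_ _ hk] := ZP i n; have [k hk'] := hk om (Zn i n).
apply: le_trans hk'; have := hth (k * Nu)%N; rewrite /Theta_t mulnK // => /(_ i).
by rewrite (rowM_coord M i th).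
Qed.
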